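(* Suppose $c,\rho>0$ satisfy the parameter condition (C), the graph $G$ is connected, and $\mathcal A\neq\emptyset$. Then the sequences $\{\mathbf z^t\}_{t\ge1}$, $\{\mathbf w^t\}_{t\ge1}$, $\{\boldsymbol\lambda^t\}_{t\ge1}$ and $\{\tilde{\mathbf z}^t\}_{t\ge1}$ generated by Algorithm SP-ADMM-JCNL are bounded.
   Context: $G=(\mathcal N,\mathcal E)$ is an undirected graph on $\mathcal N=\{1,\dots,N\}$, $\mathcal N_i=\{j:(i,j)\in\mathcal E\}$, $N_i=|\mathcal N_i|\ge1$ (neighbors listed in a fixed order). $\mathcal A\subseteq\mathcal N$ is the set of anchors with known positions $\mathbf a_k\in\mathbb R^n$. Measurements $d_{i,j}=d_{j,i}\ge0$ ($j\in\mathcal N_i$) and $r_i\ge0$. $\mathcal B^{k}$ is the product of $k$ closed Euclidean unit balls of $\mathbb R^n$; $\delta_C$ is the indicator function of $C$. Variables: $\mathbf z_i=(\mathbf x_i,\mathbf p_i^-,\mathbf p_i^+,\mathbf y_i,\mathbf q_i^-,\mathbf q_i^+)\in\mathbb R^{(4N_i+2)n}$ with $\mathbf p_i^\pm=(\mathbf p^\pm_{i,j})_{j\in\mathcal N_i}$, $\mathbf q_i^\pm=(\mathbf q^\pm_{i,j})_{j\in\mathcal N_i}$ (blocks in $\mathbb R^n$), $\mathbf z=(\mathbf z_i)_i$; $\mathbf w_i=((\mathbf v_{i,j})_{j\in\mathcal N_i},\mathbf u_i)\in\mathbb R^{(N_i+1)n}$, $\mathbf w=(\mathbf w_i)_i$;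 $\boldsymbol\lambda_i\in\mathbb R^{3N_in}$. Linear maps (identified with their matrices): $\mathbf H_i\mathbf z_i=((\mathbf x_i-\mathbf p^+_{i,j})_{j},\mathbf x_i-\mathbf y_i)$, $\mathbf A_i\mathbf z_i=((\mathbf x_i-\mathbf p^-_{i,j})_j,(\mathbf y_i-\mathbf q^-_{i,j})_j,(\mathbf y_i-\mathbf q^+_{i,j})_j)$, $\mathbf D_i=\mathrm{Diag}((d_{i,j})_{j\in\mathcal N_i},r_i)\otimes\mathbf I_n$. $G_i(\mathbf z_i,\mathbf w_i)=\frac12\|\mathbf H_i\mathbf z_i\|^2-\mathbf w_i^T\mathbf D_i\mathbf H_i\mathbf z_i$. $\mathcal X=\{\mathbf z:\mathbf x_i=\mathbf a_i\ \forall i\in\mathcal A\}$, $\mathcal Y=\{\mathbf z:\mathbf p^+_{i,j}=\mathbf p^-_{j,i},\ \mathbf q^+_{i,j}=\mathbf q^-_{j,i}\ \forall i,\ j\in\mathcal N_i\}$. $|\mathbf M|$ is the entrywise absolute value, $\|\mathbf v\|^2_{\mathbf M}=\mathbf v^T\mathbf M\mathbf v$, $\mathbf S_i=|\mathbf A_i^T\mathbf A_i|+\frac1c|\mathbf H_i^T\mathbf H_i|$, $\mathbf U_i=\mathbf H_i^T\mathbf H_i+c\mathbf A_i^T\mathbf A_i+c\mathbf S_i$ (a positive definite diagonal matrix). Augmented Lagrangian: $\mathcal L_i(\mathbf z_i,\mathbf w_i,\boldsymbol\lambda_i)=G_i(\mathbf z_i,\mathbf w_i)+\delta_{\mathcal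 B^{N_i+1}}(\mathbf w_i)+\langle\boldsymbol\lambda_i,\mathbf A_i\mathbf z_i\rangle+\frac c2\|\mathbf A_i\mathbf z_i\|^2$. Algorithm SP-ADMM-JCNL (parameters $c,\rho>0$; arbitrary $\mathbf z^0,\mathbf w^0$, $\boldsymbol\lambda^0=\mathbf 0$): for $t\ge0$, $\mathbf z^{t+1}=\arg\min_{\mathbf z\in\mathcal X\cap\mathcal Y}\sum_i[\mathcal L_i(\mathbf z_i,\mathbf w_i^t,\boldsymbol\lambda_i^t)+\frac c2\|\mathbf z_i-\mathbf z_i^t\|^2_{\mathbf S_i}]$; $\mathbf w_i^{t+1}=\mathrm{proj}_{\mathcal B^{N_i+1}}(\mathbf w_i^t+\rho^{-1}\mathbf D_i\mathbf H_i\mathbf z_i^{t+1})$; $\boldsymbol\lambda_i^{t+1}=\boldsymbol\lambda_i^t+c\mathbf A_i\mathbf z_i^{t+1}$. Auxiliary sequence: $\tilde{\mathbf z}_i^{t+1}=\mathbf U_i^{-1}(\mathbf H_i^T\mathbf D_i\mathbf w_i^t-\mathbf A_i^T\boldsymbol\lambda_i^t+c\mathbf S_i\mathbf z_i^t)$ for $t\ge0$, $\tilde{\mathbf z}^t=(\tilde{\mathbf z}_i^t)_i$. Constants: $N_{\max}=\max_iN_i$, $N_{\mathrm{sum}}=\sum_iN_i$, $d_{\max}=\max(\{d_{i,j}\}\cup\{r_i\})$, $\tilde\tau_{\min}=\min_{i\in\mathcal N}\{5(c+1)^2N_i^2+(3c^2+4c+3)N_i\}$. Parameter condition (C): there exist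 $\kappa_1,\kappa_2>0$ with $\kappa_1\ge6(2N_{\max}+2)(1+\frac1c)$, $\kappa_2\ge\frac{3N_{\mathrm{sum}}n(c+1)^2(2N_{\max}+1)\kappa_1}{\tilde\tau_{\min}}$, and $\rho\ge4d_{\max}^2(\kappa_1+\kappa_2)$. *)

(* Defs.v *)
From HB Require Import structures.
From mathcomp Require Import all_boot all_order all_algebra.
From mathcomp Require Import reals.
Set Implicit Arguments. Unset Strict Implicit. Unset Printing Implicit Defensive.
Import Order.TTheory GRing.Theory Num.Theory.
Local Open Scope ring_scope.

Definition NB (N : nat) (E : rel 'I_N) (i : 'I_N) : finType := {j : 'I_N | E i j}.

(* Coordinates of the local variable z_i in R^{(4N_i+2)n}:
   inl (inl k)               : (x_i)_k
   inl (inr k)               : (y_i)_k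
   inr (false,false,j,k)     : (p^-_{i,j})_k
   inr (false,true ,j,k)     : (p^+_{i,j})_k
   inr (true ,false,j,k)     : (q^-_{i,j})_k
   inr (true ,true ,j,k)     : (q^+_{i,j})_k                           *)
Definition zix (n N : nat) (E : rel 'I_N) (i : 'I_N) : finType :=
  (('I_n + 'I_n) + (bool * bool * NB E i * 'I_n))%type.

(* Coordinates of w_i (and of H_i z_i) in R^{(N_i+1)n}:
   (Some j, k) : (v_{i,j})_k   ,   (None, k) : (u_i)_k                 *)
Definition wix (n N : nat) (E : rel 'I_N) (i : 'I_N) : finType :=
  (option (NB E i) * 'I_n)%type.

(* Coordinates of A_i z_i and lambda_i in R^{3N_i n}:
   (m, j, k), m = 0 : x_i - p^-_{ij},  m = 1 : y_i - q^-_{ij},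
   m = 2 : y_i - q^+_{ij}                                              *)
Definition aix (n N : nat) (E : rel 'I_N) (i : 'I_N) : finType :=
  ('I_3 * NB E i * 'I_n)%type.

Section Idx.
Variables (n N : nat) (E : rel 'I_N) (i : 'I_N).
Definition ix_x (k : 'I_n) : zix n E i := inl (inl k).
Definition ix_y (k : 'I_n) : zix n E i := inl (inr k).
Definition ix_pm (j : NB E i) (k : 'I_n) : zix n E i := inr (false, false, j, k).
Definition ix_pp (j : NB E i) (k : 'I_n) : zix n E i := inr (false, true, j, k).
Definition ix_qm (j : NB E i) (k : 'I_n) : zix n E i := inr (true, false, j, k).
Definition ix_qp (j : NB E i) (k : 'I_n) : zix n E i := inr (true, true, j, k).
End Idx.

Section LinAlg.
Variable R : realType.
Definition mapp (T1 T2 : finType) (M : T1 -> T2 -> R) (v : T2 -> R) : T1 -> R :=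
  fun a => \sum_b M a b * v b.
Definition mappT (T1 T2 : finType) (M : T1 -> T2 -> R) (v : T1 -> R) : T2 -> R :=
  fun b => \sum_a M a b * v a.
Definition mtm (T1 T2 : finType) (M : T1 -> T2 -> R) : T2 -> T2 -> R :=
  fun a b => \sum_r M r a * M r b.
Definition mabs (T1 T2 : finType) (M : T1 -> T2 -> R) : T1 -> T2 -> R :=
  fun a b => `|M a b|.
Definition dotv (T : finType) (u v : T -> R) : R := \sum_a u a * v a.
Definition sqn (T : finType) (v : T -> R) : R := dotv v v.
Definition wsqn (T : finType) (M : T -> T -> R) (v : T -> R) : R :=
  \sum_a \sum_b v a * M a b * v b.
Definition vsub (T : finType) (u v : T -> R) : T -> R := fun a => u a - v a.
End LinAlg.

Section Problem.
Variables (R : realType) (n N : nat) (E : rel 'I_N) (i : 'I_N).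
Local Notation Z := (zix n E i).
Local Notation W := (wix n E i).
Local Notation Aix := (aix n E i).

(* H_i z_i = ((x_i - p^+_{ij})_j, x_i - y_i) *)
Definition Hmat (r : W) (a : Z) : R :=
  match r with
  | (Some j, k) => (a == ix_x E i k)%:R - (a == ix_pp j k)%:R
  | (None, k) => (a == ix_x E i k)%:R - (a == ix_y E i k)%:R
  end.

(* A_i z_i = ((x_i - p^-_{ij})_j, (y_i - q^-_{ij})_j, (y_i - q^+_{ij})_j) *)
Definition Amat (r : Aix) (a : Z) : R :=
  match r with
  | (m, j, k) =>
      if val m == 0%N then (a == ix_x E i k)%:R - (a == ix_pm j k)%:R
      else if val m == 1%N then (a == ix_y E i k)%:R - (a == ix_qm j k)%:R
      else (a == ix_y E i k)%:R - (a == ix_qp j k)%:R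
  end.

(* diagonal of D_i = Diag((d_{ij})_j, r_i) (x) I_n *)
Definition Ddiag (d : 'I_N -> 'I_N -> R) (rr : 'I_N -> R) (r : W) : R :=
  match r with
  | (Some j, _) => d i (val j)
  | (None, _) => rr i
  end.

Definition Dapp d rr (v : W -> R) : W -> R := fun r => Ddiag d rr r * v r.

Definition Gi d rr (z : Z -> R) (w : W -> R) : R :=
  2^-1 * sqn (mapp Hmat z) - dotv w (Dapp d rr (mapp Hmat z)).

Definition Smat (c : R) : Z -> Z -> R :=
  fun a b => mabs (mtm Amat) a b + c^-1 * mabs (mtm Hmat) a b.

Definition Umat (c : R) : Z -> Z -> R :=
  fun a b => mtm Hmat a b + c * mtm Amat a b + c * Smat c a b.

(* The z-dependent part of  L_i(z_i, w_i, lambda_i) + c/2 ||z_i - zold_i||^2_{S_i}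
   (the indicator delta_{B^{N_i+1}}(w_i) does not depend on z_i). *)
Definition zobj_i (c : R) d rr (z : Z -> R) (w : W -> R) (lam : Aix -> R)
    (zold : Z -> R) : R :=
  Gi d rr z w + dotv lam (mapp Amat z) + c / 2 * sqn (mapp Amat z)
  + c / 2 * wsqn (Smat c) (vsub z zold).

Definition inBalls (w : W -> R) : Prop :=
  forall blk : option (NB E i), \sum_(k < n) (w (blk, k)) ^+ 2 <= 1.

End Problem.
Arguments Hmat {R n N} E i r a.
Arguments Amat {R n N} E i r a.
Arguments Smat {R n N} E i c a b.
Arguments Umat {R n N} E i c a b.

Definition zvar (R : realType) (n N : nat) (E : rel 'I_N) :=
  forall i : 'I_N, zix n E i -> R.
Definition wvar (R : realType) (n N : nat) (E : rel 'I_N) :=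
  forall i : 'I_N, wix n E i -> R.
Definition lvar (R : realType) (n N : nat) (E : rel 'I_N) :=
  forall i : 'I_N, aix n E i -> R.

Definition gsqn (R : realType) (N : nat) (T : 'I_N -> finType)
    (v : forall i, T i -> R) : R := \sum_i sqn (v i).

Definition inX (R : realType) (n N : nat) (E : rel 'I_N) (Anc : {set 'I_N})
    (a : 'I_N -> 'I_n -> R) (z : zvar R n E) : Prop :=
  forall i, i \in Anc -> forall k, z i (ix_x E i k) = a i k.

Definition inY (R : realType) (n N : nat) (E : rel 'I_N) (z : zvar R n E) : Prop :=
  forall (i : 'I_N) (j : NB E i) (i' : NB E (val j)), val i' = i ->
    forall k, z i (ix_pp j k) = z (val j) (ix_pm i' k)
           /\ z i (ix_qp j k) = z (val j) (ix_qm i' k).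

Definition zobj (R : realType) (n N : nat) (E : rel 'I_N) (c : R)
    (d : 'I_N -> 'I_N -> R) (rr : 'I_N -> R)
    (z : zvar R n E) (w : wvar R n E) (lam : lvar R n E) (zold : zvar R n E) : R :=
  \sum_i zobj_i c d rr (z i) (w i) (lam i) (zold i).

Definition sp_admm_jcnl (R : realType) (n N : nat) (E : rel 'I_N)
    (Anc : {set 'I_N}) (a : 'I_N -> 'I_n -> R)
    (d : 'I_N -> 'I_N -> R) (rr : 'I_N -> R) (c rho : R)
    (z : nat -> zvar R n E) (w : nat -> wvar R n E) (lam : nat -> lvar R n E)
    : Prop :=
  (forall i r, lam 0%N i r = 0) /\
  forall t : nat,
    (inX Anc a (z t.+1) /\ inY (z t.+1) /\
     forall z' : zvar R n E, inX Anc a z' -> inY z' ->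
       zobj c d rr (z t.+1) (w t) (lam t) (z t) <= zobj c d rr z' (w t) (lam t) (z t))
    /\
    (* w_i^{t+1} = proj_{B^{N_i+1}}(w_i^t + rho^-1 D_i H_i z_i^{t+1}) *)
    (forall i,
       let v := fun r => w t i r + rho^-1 * Dapp d rr (mapp (Hmat E i) (z t.+1 i)) r in
       inBalls (w t.+1 i) /\
       forall u, inBalls u -> sqn (vsub (w t.+1 i) v) <= sqn (vsub u v))
    /\
    (forall i r, lam t.+1 i r = lam t i r + c * mapp (Amat E i) (z t.+1 i) r).

(* auxiliary sequence: U_i ztil_i^{t+1} = H_i^T D_i w_i^t - A_i^T lambda_i^t + c S_i z_i^t
   (U_i is invertible, so this determines ztil_i^{t+1}). *)
Definition is_aux_seq (R : realType) (n N : nat) (E : rel 'I_N)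
    (d : 'I_N -> 'I_N -> R) (rr : 'I_N -> R) (c : R)
    (z : nat -> zvar R n E) (w : nat -> wvar R n E) (lam : nat -> lvar R n E)
    (ztil : nat -> zvar R n E) : Prop :=
  forall (t : nat) (i : 'I_N) (a : zix n E i),
    mapp (Umat E i c) (ztil t.+1 i) a =
      mappT (Hmat E i) (Dapp d rr (w t i)) a - mappT (Amat E i) (lam t i) a
      + c * mapp (Smat E i c) (z t i) a.

Definition Ndeg (N : nat) (E : rel 'I_N) (i : 'I_N) : nat := #|NB E i|.
Definition Nmax (N : nat) (E : rel 'I_N) : nat := \max_i Ndeg E i.
Definition Nsum (N : nat) (E : rel 'I_N) : nat := \sum_i Ndeg E i.
(* d_max = max({d_ij : j in N_i} u {r_i}); all these are >= 0 *)
Definition dmax (R : realType) (N : nat) (E : rel 'I_N)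
    (d : 'I_N -> 'I_N -> R) (rr : 'I_N -> R) : R :=
  \big[Num.max/0]_i Num.max (rr i) (\big[Num.max/0]_(j : NB E i) d i (val j)).
Definition tau_i (R : realType) (c : R) (Ni : nat) : R :=
  5 * (c + 1) ^+ 2 * (Ni%:R) ^+ 2 + (3 * c ^+ 2 + 4 * c + 3) * Ni%:R.
(* minimum over i of tau_i; the neutral element of the fold is the maximum of
   the tau_i, so this is exactly min_i tau_i whenever N >= 1 *)
Definition tau_maxv (R : realType) (N : nat) (E : rel 'I_N) (c : R) : R :=
  \big[Num.max/0]_i tau_i c (Ndeg E i).
Definition tau_min (R : realType) (N : nat) (E : rel 'I_N) (c : R) : R :=
  \big[Num.min/tau_maxv E c]_i tau_i c (Ndeg E i).

Definition condC (R : realType) (n N : nat) (E : rel 'I_N)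
    (d : 'I_N -> 'I_N -> R) (rr : 'I_N -> R) (c rho : R) : Prop :=
  exists k1 k2 : R, 0 < k1 /\ 0 < k2 /\
    6 * (2 * (Nmax E)%:R + 2) * (1 + c^-1) <= k1 /\
    3 * (Nsum E)%:R * n%:R * (c + 1) ^+ 2 * (2 * (Nmax E)%:R + 1) * k1
      / tau_min E c <= k2 /\
    4 * dmax E d rr ^+ 2 * (k1 + k2) <= rho.

(* Main.v *)
Require Import Defs.
From HB Require Import structures.
From mathcomp Require Import all_boot all_order all_algebra.
From mathcomp Require Import reals.
From mathcomp Require Import ring lra.
From Stdlib Require Import FunctionalExtensionality.
Import Order.TTheory GRing.Theory Num.Theory.
Local Open Scope ring_scope.
Set Implicit Arguments. Unset Strict Implicit. Unset Printing Implicit Defensive.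

Section Gen.
Variable R : realType.

Lemma quad_disc (p b q : R) : 0 <= p -> (forall s : R, 0 <= s ^+ 2 * p + 2 * s * b + q) -> b ^+ 2 <= p * q.
Proof.
move=> p0 H; have [pz|pp] := eqVneq p 0.
  rewrite pz mul0r; have [bz|bn] := eqVneq b 0; first by rewrite bz expr2 mulr0.
  have := H (- (q + 1) / (2 * b)); rewrite pz mulr0 add0r.
  have -> : 2 * (- (q + 1) / (2 * b)) * b = - (q + 1).
    by field; exact: bn.
  lra.
have pg : 0 < p by rewrite lt_def pp p0.
have := H (- b / p).
have -> : (- b / p) ^+ 2 * p + 2 * (- b / p) * b + q = q - b ^+ 2 / p by field.
rewrite subr_ge0 ler_pdivrMr // => h; by rewrite mulrC.
Qed.

Lemma quad_bound (p b q k : R) : 0 < k -> (forall s : R, 0 <= s ^+ 2 * p + 2 * s * b + q) ->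
  2 * `|b| <= k * p + k^-1 * q.
Proof.
move=> k0 H; have h1 := H k; have h2 := H (- k).
have k0' : k != 0 by rewrite gt_eqF.
have e : k * p + k^-1 * q = k^-1 * (k ^+ 2 * p + q) by field.
rewrite e ler_pdivlMl //.
case: (ler0P b) => hb; nra.
Qed.

Lemma sum_ind (T : finType) (a : T) (f : T -> R) : \sum_b (b == a)%:R * f b = f a.
Proof.
rewrite (bigD1 a) //= eqxx mul1r big1 ?addr0 // => b /negbTE ->; by rewrite mul0r.
Qed.

Lemma sum_ind' (T : finType) (a : T) (f : T -> R) : \sum_b f b * (b == a)%:R = f a.
Proof. rewrite -(sum_ind a f); apply: eq_bigr => b _; by rewrite mulrC. Qed.

Variable T : finType.
Implicit Types u v x y : T -> R.

Lemma dotvC u v : dotv u v = dotv v u.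
Proof. by apply: eq_bigr => ? _; rewrite mulrC. Qed.

Lemma dotvDl s u u' v : dotv (fun a => s * u a + u' a) v = s * dotv u v + dotv u' v.
Proof. rewrite /dotv mulr_sumr -big_split; apply: eq_bigr => ? _ /=; ring. Qed.

Lemma dotvDr s u v v' : dotv u (fun a => s * v a + v' a) = s * dotv u v + dotv u v'.
Proof. by rewrite dotvC dotvDl !(dotvC u). Qed.

Lemma dotvN u v : dotv (fun a => - u a) v = - dotv u v.
Proof. rewrite /dotv -sumrN; apply: eq_bigr => ? _; ring. Qed.

Lemma dotvS u u' v : dotv (fun a => u a - u' a) v = dotv u v - dotv u' v.
Proof. rewrite /dotv -sumrB; apply: eq_bigr => ? _; ring. Qed.

Lemma dotvZ s u v : dotv (fun a => s * u a) v = s * dotv u v.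
Proof. rewrite /dotv mulr_sumr; apply: eq_bigr => ? _; ring. Qed.

Lemma dotv0 u : dotv (fun _ => 0) u = 0.
Proof. by rewrite /dotv big1 // => ? _; rewrite mul0r. Qed.

Lemma sqn_ge0 u : 0 <= sqn u.
Proof. by apply: sumr_ge0 => ? _; rewrite -expr2 sqr_ge0. Qed.

Lemma sqn_eq0 u : sqn u = 0 -> forall a, u a = 0.
Proof.
move=> h a; have H0 : forall b, xpredT b -> 0 <= u b * u b by move=> b _; rewrite -expr2 sqr_ge0.
have h2 := psumr_eq0P H0 h; move: (h2 a isT) => /eqP; by rewrite mulf_eq0 orbb => /eqP.
Qed.

Lemma sqn_quad u v : forall s, 0 <= s ^+ 2 * sqn u + 2 * s * dotv u v + sqn v.
Proof.
move=> s; have := sqn_ge0 (fun a => s * u a + v a).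
rewrite /sqn dotvDl !dotvDr (dotvC v u); by have -> : s * (s * dotv u u + dotv u v) + (s * dotv u v + dotv v v) = s ^+ 2 * dotv u u + 2 * s * dotv u v + dotv v v by ring.
Qed.

Lemma CS u v : dotv u v ^+ 2 <= sqn u * sqn v.
Proof. apply: quad_disc; [exact: sqn_ge0 | exact: sqn_quad]. Qed.

Lemma dot_bound u v k : 0 < k -> 2 * `|dotv u v| <= k * sqn u + k^-1 * sqn v.
Proof. move=> k0; apply: quad_bound => //; exact: sqn_quad. Qed.

Lemma sqnD u v : sqn (fun a => u a + v a) <= 2 * (sqn u + sqn v).
Proof.
have := dot_bound u v ltr01; rewrite invr1 !mul1r => h.
have e : sqn (fun a => u a + v a) = sqn u + 2 * dotv u v + sqn v.
  rewrite /sqn; have := dotvDl 1 u v (fun a => u a + v a); rewrite mul1r.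
  have -> : (fun a => 1 * u a + v a) = (fun a => u a + v a) by apply: functional_extensionality => ?; rewrite mul1r.
  move=> ->; have := dotvDr 1 u u v; have := dotvDr 1 v u v.
  have -> : (fun a => 1 * u a + v a) = (fun a => u a + v a) by apply: functional_extensionality => ?; rewrite mul1r.
  move=> -> ->; rewrite (dotvC v u); ring.
rewrite e; have := ler_norm (dotv u v); lra.
Qed.

End Gen.

Section Gen2.
Variable R : realType.

Definition wdot (T : finType) (M : T -> T -> R) (x y : T -> R) : R :=
  \sum_a \sum_b x a * M a b * y b.

Lemma wdot_mtm (T1 T : finType) (M : T1 -> T -> R) x y :
  wdot (mtm M) x y = dotv (mapp M x) (mapp M y).
Proof.
rewrite /wdot /dotv /mapp /mtm.
transitivity (\sum_a \sum_b \sum_r x a * M r a * (M r b * y b)).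
  apply: eq_bigr => a _; apply: eq_bigr => b _; rewrite mulr_sumr mulr_suml.
  by apply: eq_bigr => r _; ring.
under eq_bigr => a _ do rewrite exchange_big /=.
rewrite exchange_big /=; apply: eq_bigr => r _.
rewrite mulr_suml; apply: eq_bigr => a _.
rewrite mulr_sumr; apply: eq_bigr => b _; ring.
Qed.

Lemma mapp_lin (T1 T : finType) (M : T1 -> T -> R) s x y :
  mapp M (fun a => s * x a + y a) = fun r => s * mapp M x r + mapp M y r.
Proof.
apply: functional_extensionality => r; rewrite /mapp mulr_sumr -big_split.
by apply: eq_bigr => a _ /=; ring.
Qed.

Lemma mappT_lin (T1 T : finType) (M : T1 -> T -> R) s x y :
  mappT M (fun a => s * x a + y a) = fun r => s * mappT M x r + mappT M y r.
Proof.
apply: functional_extensionality => r; rewrite /mappT mulr_sumr -big_split.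
by apply: eq_bigr => a _ /=; ring.
Qed.

Definition msq (T1 T : finType) (M : T1 -> T -> R) : R := \sum_r \sum_a M r a ^+ 2.

Lemma msq_ge0 (T1 T : finType) (M : T1 -> T -> R) : 0 <= msq M.
Proof. by apply: sumr_ge0 => r _; apply: sumr_ge0 => a _; rewrite sqr_ge0. Qed.

Lemma sqn_mapp (T1 T : finType) (M : T1 -> T -> R) v :
  sqn (mapp M v) <= msq M * sqn v.
Proof.
rewrite /sqn {1}/dotv /msq mulr_suml; apply: ler_sum => r _.
have := CS (M r) v; rewrite expr2 /mapp /sqn /dotv.
suff -> : \sum_a M r a ^+ 2 = \sum_a M r a * M r a by [].
by apply: eq_bigr => a _; rewrite expr2.
Qed.

Lemma sqn_mappT (T1 T : finType) (M : T1 -> T -> R) v :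
  sqn (mappT M v) <= msq M * sqn v.
Proof.
rewrite /sqn {1}/dotv /msq exchange_big /= mulr_suml; apply: ler_sum => b _.
have := CS (fun a => M a b) v; rewrite expr2 /mappT /sqn /dotv.
suff -> : \sum_a M a b ^+ 2 = \sum_a M a b * M a b by [].
by apply: eq_bigr => a _; rewrite expr2.
Qed.

Definition fv (I : finType) (T : I -> finType) := forall i : I, T i -> R.
Definition fsqn (I : finType) (T : I -> finType) (v : fv T) : R := \sum_i sqn (v i).
Definition linF (I1 I2 : finType) (T1 : I1 -> finType) (T2 : I2 -> finType)
  (f : fv T1 -> fv T2) :=
  forall s x y, f (fun i a => s * x i a + y i a) = fun j b => s * f x j b + f y j b.

Lemma fext (I : finType) (T : I -> finType) (u v : fv T) :
  (forall i a, u i a = v i a) -> u = v.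
Proof.
move=> h; apply: functional_extensionality_dep => i.
by apply: functional_extensionality => a; apply: h.
Qed.

Lemma fsqn_ge0 (I : finType) (T : I -> finType) (v : fv T) : 0 <= fsqn v.
Proof. by apply: sumr_ge0 => i _; apply: sqn_ge0. Qed.

Lemma fsqn_sig (I : finType) (T : I -> finType) (v : fv T) :
  fsqn v = \sum_(x : {i : I & T i}) v (tag x) (tagged x) ^+ 2.
Proof.
rewrite /fsqn /sqn /dotv.
under eq_bigr => i _ do under eq_bigr => a _ do rewrite -expr2.
exact: (sig_big_dep xpredT (fun _ => xpredT) (fun i a => v i a ^+ 2)).
Qed.

Section Rep.
Variables (I1 I2 : finType) (T1 : I1 -> finType) (T2 : I2 -> finType).
Local Notation X := {i : I1 & T1 i}.
Local Notation Y := {j : I2 & T2 j}.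

Definition fdelta (x : X) : fv T1 := fun i a => (Tagged T1 a == x)%:R.
Arguments fdelta x i a : clear implicits.

Lemma taggedE (x : X) : Tagged T1 (tagged x) = x.
Proof. by case: x. Qed.

Lemma fdecomp (v : fv T1) i a :
  v i a = \sum_(x : X) v (tag x) (tagged x) * fdelta x i a.
Proof.
rewrite /fdelta; under eq_bigr => x _ do rewrite eq_sym.
by rewrite (sum_ind' (Tagged T1 a) (fun x => v (tag x) (tagged x))).
Qed.

Lemma linF0 (f : fv T1 -> fv T2) : linF f -> f (fun _ _ => 0) = fun _ _ => 0.
Proof.
move=> lf; have := lf (-1) (fun _ _ => 0) (fun _ _ => 0).
have -> : (fun (i : I1) (_ : T1 i) => -1 * 0 + 0) = (fun _ _ => 0 : R).
  by apply: fext => ? ?; rewrite mulr0 addr0.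
move=> ->; apply: fext => ? ?; ring.
Qed.

Lemma linF_sum (f : fv T1 -> fv T2) (lf : linF f) (s : seq X) (c : X -> R) (g : X -> fv T1) :
  f (fun i a => \sum_(x <- s) c x * g x i a) = fun j b => \sum_(x <- s) c x * f (g x) j b.
Proof.
elim: s => [|x s IH].
  rewrite (_ : (fun i a => _) = (fun _ _ => 0)); last by apply: fext => ? ?; rewrite big_nil.
  by rewrite linF0 //; apply: fext => ? ?; rewrite big_nil.
rewrite (_ : (fun i a => _) = (fun i a => c x * g x i a + \sum_(x0 <- s) c x0 * g x0 i a)); last first.
  by apply: fext => ? ?; rewrite big_cons.
by rewrite lf IH; apply: fext => ? ?; rewrite big_cons.
Qed.

Definition fmat (f : fv T1 -> fv T2) (y : Y) (x : X) : R := f (fdelta x) (tag y) (tagged y).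

Lemma frep (f : fv T1 -> fv T2) (lf : linF f) (v : fv T1) j b :
  f v j b = \sum_(x : X) v (tag x) (tagged x) * f (fdelta x) j b.
Proof.
have Ev : v = fun i a => \sum_(x <- index_enum X) v (tag x) (tagged x) * fdelta x i a.
  by apply: fext => i a; rewrite {1}(fdecomp v a).
by rewrite {1}Ev linF_sum.
Qed.

Lemma LB (f : fv T1 -> fv T2) : linF f -> exists K, 0 <= K /\ forall v, fsqn (f v) <= K * fsqn v.
Proof.
move=> lf; exists (\sum_(y : Y) \sum_(x : X) fmat f y x ^+ 2); split.
  by apply: sumr_ge0 => ? _; apply: sumr_ge0 => ? _; apply: sqr_ge0.
move=> v; rewrite (fsqn_sig (f v)) (fsqn_sig v) mulr_suml; apply: ler_sum => y _.
rewrite frep //.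
have h := CS (fun x => v (tag x) (tagged x)) (fmat f y).
apply: (le_trans h); rewrite mulrC /sqn /dotv.
under eq_bigr => a _ do rewrite -expr2.
by under [X in _ * X]eq_bigr => a _ do rewrite -expr2.
Qed.

End Rep.
End Gen2.

Section GIsec.
Variable R : realType.
Variables (I1 I2 : finType) (T1 : I1 -> finType) (T2 : I2 -> finType).
Definition sigX : finType := {i : I1 & T1 i}.
Definition sigY : finType := {j : I2 & T2 j}.
Local Notation X := sigX.
Local Notation Y := sigY.
Variable f : @fv R I1 T1 -> @fv R I2 T2.
Hypothesis lf : linF f.

Definition Lm : 'M[R]_(#|Y|, #|X|) := \matrix_(i, j) fmat f (enum_val i) (enum_val j).
Definition Pm := pinvmx Lm.
Definition ginv (u : fv R T2) : fv R T1 :=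
  fun i a => \sum_(y : Y) Pm (enum_rank (Tagged T1 a)) (enum_rank y) * u (tag y) (tagged y).

Lemma LPL : Lm *m Pm *m Lm = Lm.
Proof. exact: (mulmxKpV (submx_refl Lm)). Qed.

Lemma LPLxy (y0 : Y) (x2 : X) :
  \sum_(x1 : X) \sum_(y : Y) fmat f y0 x1 * Pm (enum_rank x1) (enum_rank y) * fmat f y x2
  = fmat f y0 x2.
Proof.
have := congr1 (fun M : 'M_(_, _) => M (enum_rank y0) (enum_rank x2)) LPL.
rewrite /= mxE [in RHS]mxE !enum_rankK => <-.
rewrite (reindex enum_rank) /=; last exact: onW_bij (enum_rank_bij Y).
rewrite exchange_big /=; apply: eq_bigr => y _.
rewrite mxE (reindex enum_rank) /=; last exact: onW_bij (enum_rank_bij X).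
rewrite mulr_suml; apply: eq_bigr => x1 _.
by rewrite !mxE !enum_rankK.
Qed.

Lemma ginv_lin : linF ginv.
Proof.
move=> s x y; apply: fext => i a; rewrite /ginv mulr_sumr -big_split.
by apply: eq_bigr => yy _ /=; ring.
Qed.

Lemma ginv_prop (x : fv R T1) : f (ginv (f x)) = f x.
Proof.
apply: fext => j b.
rewrite (frep lf (ginv (f x))) (frep lf x).
pose yb := Tagged T2 b.
transitivity (\sum_(x1 : X) \sum_(y : Y) \sum_(x2 : X)
   x (tag x2) (tagged x2) * (fmat f yb x1 * Pm (enum_rank x1) (enum_rank y) * fmat f y x2)).
  apply: eq_bigr => x1 _; rewrite /ginv taggedE mulr_suml; apply: eq_bigr => y _.
  rewrite (frep lf x) mulr_sumr mulr_suml; apply: eq_bigr => x2 _.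
  rewrite /fmat /=; ring.
under eq_bigr => x1 _ do rewrite exchange_big /=.
rewrite exchange_big /=; apply: eq_bigr => x2 _.
under eq_bigr => x1 _ do rewrite -mulr_sumr.
by rewrite -mulr_sumr LPLxy.
Qed.

Lemma GI : exists (g : fv R T2 -> fv R T1) (K : R), 0 <= K /\
  (forall u, fsqn (g u) <= K * fsqn u) /\ (forall x, f (g (f x)) = f x).
Proof.
have [K [K0 HK]] := LB ginv_lin.
by exists ginv, K; split=> //; split=> // x; apply: ginv_prop.
Qed.
End GIsec.

Section GLsec.
Variable R : realType.
Variables (I1 I2 I3 I4 : finType) (T1 : I1 -> finType) (T2 : I2 -> finType)
  (T3 : I3 -> finType) (T4 : I4 -> finType).

Definition T23 (s : (I2 + I3)%type) : finType :=
  match s with inl i => T2 i | inr j => T3 j end.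

Definition fcomb (f1 : @fv R I1 T1 -> @fv R I2 T2) (f2 : @fv R I1 T1 -> @fv R I3 T3)
  (x : fv R T1) : @fv R _ T23 :=
  fun s => match s as s0 return T23 s0 -> R with inl i => f1 x i | inr j => f2 x j end.

Lemma GL (f1 : @fv R I1 T1 -> @fv R I2 T2) (f2 : @fv R I1 T1 -> @fv R I3 T3)
  (h : @fv R I1 T1 -> @fv R I4 T4) :
  linF f1 -> linF f2 -> linF h ->
  (forall x, f1 x = (fun _ _ => 0) -> f2 x = (fun _ _ => 0) -> h x = (fun _ _ => 0)) ->
  exists K, 0 <= K /\ forall x, fsqn (h x) <= K * (fsqn (f1 x) + fsqn (f2 x)).
Proof.
move=> l1 l2 lh hk.
have lF : linF (fcomb f1 f2).
  move=> s x y; apply: fext => -[i|i] a /=; by rewrite ?l1 ?l2.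
have [g [Kg [Kg0 [HKg Hg]]]] := GI lF.
have [Kh [Kh0 HKh]] := LB lh.
exists (Kh * Kg); split; first exact: mulr_ge0.
move=> x; set x' := g (fcomb f1 f2 x).
pose dd := fun i a => -1 * x' i a + x i a.
have Fd : fcomb f1 f2 dd = fun _ _ => 0.
  rewrite /dd lF Hg; apply: fext => s a; ring.
have hd : h dd = fun _ _ => 0.
  apply: hk; apply: fext => i a.
    by have := congr1 (fun F : fv R T23 => F (inl i) a) Fd.
  by have := congr1 (fun F : fv R T23 => F (inr i) a) Fd.
have hx : h x = h x'.
  apply: fext => i a; have := congr1 (fun F : fv R T4 => F i a) hd; rewrite /dd lh /=.
  by move=> e; apply/eqP; rewrite -subr_eq0; apply/eqP; rewrite -e; ring.
have eF : fsqn (fcomb f1 f2 x) = fsqn (f1 x) + fsqn (f2 x).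
  by rewrite /fsqn big_sumType.
rewrite hx -eF -mulrA; apply: (le_trans (HKh x')).
by apply: ler_wpM2l => //; apply: HKg.
Qed.
End GLsec.

Section Rows.
Variable R : realType.

Lemma sum_indsub (T : finType) (p q : T) (z : T -> R) :
  \sum_a ((a == p)%:R - (a == q)%:R) * z a = z p - z q.
Proof.
rewrite -(sum_ind p z) -(sum_ind q z) -sumrB; apply: eq_bigr => a _; ring.
Qed.

Lemma sum_indadd (T : finType) (p q : T) (z : T -> R) :
  \sum_a ((a == p)%:R + (a == q)%:R) * z a = z p + z q.
Proof.
rewrite -(sum_ind p z) -(sum_ind q z) -big_split; apply: eq_bigr => a _ /=; ring.
Qed.

Variables (T1 T : finType) (M : T1 -> T -> R) (p q : T1 -> T).
Hypothesis pq : forall r, p r != q r.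
Hypothesis HM : forall r a, M r a = (a == p r)%:R - (a == q r)%:R.

Lemma mapp_row z r : mapp M z r = z (p r) - z (q r).
Proof. by rewrite /mapp -sum_indsub; apply: eq_bigr => a _; rewrite HM. Qed.

Lemma mabs_row r a : mabs M r a = (a == p r)%:R + (a == q r)%:R.
Proof.
rewrite /mabs HM; have := pq r.
case: (eqVneq a (p r)) => ea; case: (eqVneq a (q r)) => eb /=.
- by rewrite -ea -eb eqxx.
- by move=> _; rewrite mulr1n mulr0n subr0 normr1 addr0.
- by move=> _; rewrite mulr1n mulr0n sub0r normrN normr1 add0r.
- by move=> _; rewrite mulr0n subr0 normr0 addr0.
Qed.

Lemma mappabs_row z r : mapp (mabs M) z r = z (p r) + z (q r).
Proof. by rewrite /mapp -sum_indadd; apply: eq_bigr => a _; rewrite mabs_row. Qed.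

Lemma mabs_mtm a b : mabs (mtm M) a b = mtm (mabs M) a b.
Proof.
rewrite /mabs /mtm.
have [->|ab] := eqVneq a b.
  rewrite ger0_norm; last by apply: sumr_ge0 => r _; rewrite -expr2 sqr_ge0.
  by apply: eq_bigr => r _; rewrite -normrM ger0_norm // -expr2 sqr_ge0.
have neg : forall r, M r a * M r b <= 0.
  move=> r; rewrite !HM; have := pq r => pqr.
  case: (eqVneq a (p r)) => ea; case: (eqVneq a (q r)) => eb;
  case: (eqVneq b (p r)) => ec; case: (eqVneq b (q r)) => ed /=;
  rewrite ?mulr1n ?mulr0n;
  try (by move: pqr; rewrite -?ea -?eb -?ec -?ed eqxx);
  try (by move: ab; rewrite ?ea ?eb ?ec ?ed eqxx);
  lra.
rewrite ler0_norm; last by apply: sumr_le0 => r _; apply: neg.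
rewrite -sumrN; apply: eq_bigr => r _.
by rewrite -normrM ler0_norm // neg.
Qed.

End Rows.

Section Local.
Variables (R : realType) (n N : nat) (E : rel 'I_N) (i : 'I_N).
Local Notation Z := (zix n E i).
Local Notation W := (wix n E i).
Local Notation Aix := (aix n E i).

Definition pA (r : Aix) : Z := let: (m, j, k) := r in
  if val m == 0%N then ix_x E i k else ix_y E i k.
Definition qA (r : Aix) : Z := let: (m, j, k) := r in
  if val m == 0%N then ix_pm j k else if val m == 1%N then ix_qm j k else ix_qp j k.
Definition pH (r : W) : Z := let: (o, k) := r in ix_x E i k.
Definition qH (r : W) : Z := let: (o, k) := r in
  match o with Some j => ix_pp j k | None => ix_y E i k end.

Lemma pqA r : pA r != qA r.
Proof. by case: r => [[m j] k] /=; case: ifP => //; case: ifP. Qed.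
Lemma pqH r : pH r != qH r.
Proof. by case: r => [[j|] k]. Qed.

Lemma HA r a : Amat E i r a = ((a == pA r)%:R - (a == qA r)%:R : R).
Proof. by case: r => [[m j] k] /=; case: ifP => //; case: ifP. Qed.
Lemma HH r a : Hmat E i r a = ((a == pH r)%:R - (a == qH r)%:R : R).
Proof. by case: r => [[j|] k]. Qed.

Lemma mappA (z : Z -> R) r : mapp (Amat E i) z r = z (pA r) - z (qA r).
Proof. exact: (mapp_row (@HA)). Qed.
Lemma mappH (z : Z -> R) r : mapp (Hmat E i) z r = z (pH r) - z (qH r).
Proof. exact: (mapp_row (@HH)). Qed.
Lemma mappAabs (z : Z -> R) r : mapp (mabs (Amat E i)) z r = z (pA r) + z (qA r).
Proof. exact: (mappabs_row pqA (@HA)). Qed.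
Lemma mappHabs (z : Z -> R) r : mapp (mabs (Hmat E i)) z r = z (pH r) + z (qH r).
Proof. exact: (mappabs_row pqH (@HH)). Qed.

Definition Sf (c : R) (x y : Z -> R) : R :=
  dotv (mapp (mabs (Amat E i)) x) (mapp (mabs (Amat E i)) y)
  + c^-1 * dotv (mapp (mabs (Hmat E i)) x) (mapp (mabs (Hmat E i)) y).

Lemma wdotD (M1 M2 : Z -> Z -> R) s x y :
  wdot (fun a b => M1 a b + s * M2 a b) x y = wdot M1 x y + s * wdot M2 x y.
Proof.
rewrite /wdot mulr_sumr -big_split; apply: eq_bigr => a _.
rewrite mulr_sumr -big_split; apply: eq_bigr => b _ /=; ring.
Qed.

Lemma wdotS c x y : wdot (Smat E i c) x y = Sf c x y.
Proof.
rewrite /Sf -!wdot_mtm -wdotD /wdot; apply: eq_bigr => a _; apply: eq_bigr => b _.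
by rewrite /Smat (mabs_mtm pqA (@HA)) (mabs_mtm pqH (@HH)).
Qed.

Lemma wdot_mapp (M : Z -> Z -> R) x y : wdot M x y = dotv x (mapp M y).
Proof.
rewrite /wdot /dotv /mapp; apply: eq_bigr => a _; rewrite mulr_sumr.
by apply: eq_bigr => b _; ring.
Qed.

Lemma SfC c x y : Sf c x y = Sf c y x.
Proof. by rewrite /Sf dotvC [dotv (mapp (mabs (Hmat E i)) x) _]dotvC. Qed.

Lemma Sf_ge0 c x : 0 < c -> 0 <= Sf c x x.
Proof.
move=> c0; apply: addr_ge0; first exact: sqn_ge0.
by apply: mulr_ge0; [rewrite invr_ge0 ltW | exact: sqn_ge0].
Qed.

Lemma SfDl c s x x' y : Sf c (fun a => s * x a + x' a) y = s * Sf c x y + Sf c x' y.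
Proof. rewrite /Sf !mapp_lin !dotvDl; ring. Qed.

Lemma SfDr c s x y y' : Sf c x (fun a => s * y a + y' a) = s * Sf c x y + Sf c x y'.
Proof. by rewrite SfC SfDl !(SfC c x). Qed.

Lemma Sf_quad c x y : 0 < c -> forall s, 0 <= s ^+ 2 * Sf c x x + 2 * s * Sf c x y + Sf c y y.
Proof.
move=> c0 s; have := Sf_ge0 (fun a => s * x a + y a) c0.
rewrite SfDl !SfDr (SfC c y x).
by have -> : s * (s * Sf c x x + Sf c x y) + (s * Sf c x y + Sf c y y) = s ^+ 2 * Sf c x x + 2 * s * Sf c x y + Sf c y y by ring.
Qed.

End Local.

Section Global.
Variables (R : realType) (n N : nat) (E : rel 'I_N).
Local Notation zv := (@fv R 'I_N (zix n E)).
Local Notation lv := (@fv R 'I_N (aix n E)).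
Local Notation wv := (@fv R 'I_N (wix n E)).

Definition gA (x : zv) : lv := fun i => mapp (Amat E i) (x i).
Definition gH (x : zv) : wv := fun i => mapp (Hmat E i) (x i).
Definition gAa (x : zv) : lv := fun i => mapp (mabs (Amat E i)) (x i).
Definition gHa (x : zv) : wv := fun i => mapp (mabs (Hmat E i)) (x i).
Definition gU (c : R) (x : zv) : zv := fun i => mapp (Umat E i c) (x i).

Lemma gA_lin : linF gA.
Proof. by move=> s x y; apply: fext => i a; rewrite /gA mapp_lin. Qed.
Lemma gH_lin : linF gH.
Proof. by move=> s x y; apply: fext => i a; rewrite /gH mapp_lin. Qed.
Lemma gAa_lin : linF gAa.
Proof. by move=> s x y; apply: fext => i a; rewrite /gAa mapp_lin. Qed.
Lemma gHa_lin : linF gHa.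
Proof. by move=> s x y; apply: fext => i a; rewrite /gHa mapp_lin. Qed.
Lemma gU_lin c : linF (gU c).
Proof. by move=> s x y; apply: fext => i a; rewrite /gU mapp_lin. Qed.

Definition o1 : 'I_3 := @Ordinal 3 1 isT.
Definition o2 : 'I_3 := @Ordinal 3 2 isT.

Variable Anc : {set 'I_N}.
Definition inV (x : zv) := inX Anc (fun _ _ => 0) x /\ inY x.

Hypothesis hs : forall i j, E i j = E j i.

Lemma revP i (j : NB E i) : E (val j) i.
Proof. by rewrite hs (valP j). Qed.
Definition revnb i (j : NB E i) : NB E (val j) := exist (fun k => E (val j) k) i (revP j).

Lemma kernel_sig (conn : forall i j, connect E i j) (anc : Anc != set0) (x : zv) (sg : R) :
  sg != 0 -> inV x ->
  (forall i r, x i (pA r) = sg * x i (qA r)) ->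
  (forall i r, x i (pH r) = sg * x i (qH r)) ->
  forall i b, x i b = 0.
Proof.
move=> sg0 [hX hY] hrA hrH.
have edge : forall i (j : NB E i) k, x i (ix_x E i k) = x (val j) (ix_x E (val j) k).
  move=> i j k.
  have h1 := hrH i (Some j, k); have h2 := hrA (val j) (ord0, revnb j, k).
  have [h3 _] := hY i j (revnb j) erefl k.
  by rewrite /= in h1 h2; rewrite h1 h2 h3.
have xconst : forall k i j, connect E i j -> x i (ix_x E i k) = x j (ix_x E j k).
  move=> k i j /connectP [p pth ->]; elim: p i pth => //= y p IH i /andP [eiy pth].
  by rewrite (edge i (exist _ y eiy) k) /=; apply: IH.
have /set0Pn [k0 k0A] := anc.
have x0 : forall i k, x i (ix_x E i k) = 0.
  by move=> i k; rewrite (xconst k i k0 (conn _ _)) hX.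
have y0 : forall i k, x i (ix_y E i k) = 0.
  move=> i k; have := hrH i (None, k); rewrite /= x0 => /esym /eqP.
  by rewrite mulf_eq0 (negbTE sg0) /= => /eqP.
move=> i [[k|k]|[[[b1 b2] j] k]]; first exact: x0; first exact: y0.
case: b1; case: b2.
- have := hrA i (o2, j, k); rewrite /= y0 => /esym /eqP.
  by rewrite mulf_eq0 (negbTE sg0) /= => /eqP.
- have := hrA i (o1, j, k); rewrite /= y0 => /esym /eqP.
  by rewrite mulf_eq0 (negbTE sg0) /= => /eqP.
- have := hrH i (Some j, k); rewrite /= x0 => /esym /eqP.
  by rewrite mulf_eq0 (negbTE sg0) /= => /eqP.
- have := hrA i (ord0, j, k); rewrite /= x0 => /esym /eqP.
  by rewrite mulf_eq0 (negbTE sg0) /= => /eqP.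
Qed.

End Global.

Section Proj.
Variables (R : realType) (n N : nat) (E : rel 'I_N) (Anc : {set 'I_N}).
Hypothesis hs : forall i j, E i j = E j i.
Local Notation zv := (@fv R 'I_N (zix n E)).

Definition gP (x : zv) : zv := fun i a =>
  match a with
  | inl (inl k) => if i \in Anc then 0 else x i a
  | inl (inr k) => x i a
  | inr (b1, b2, j, k) => if b2 then x (val j) (inr (b1, false, revnb hs j, k)) else x i a
  end.

Lemma gP_lin : linF gP.
Proof.
move=> s x y; apply: fext => i [[k|k]|[[[b1 b2] j] k]] /=; rewrite ?mulr0 ?addr0 //.
by case: ifP => _; rewrite ?mulr0 ?addr0.
by case: b2.
Qed.

Lemma gP_inV x : inV Anc (gP x).
Proof.
split.
  by move=> i iA k; rewrite /gP /= iA.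
move=> i j i' e k; rewrite /gP /=.
have -> : revnb hs j = i' by apply: val_inj; rewrite /= e.
by [].
Qed.

Lemma gP_id x : inV Anc x -> gP x = x.
Proof.
move=> [hX hY]; apply: fext => i [[k|k]|[[[b1 b2] j] k]] /=.
- by case: ifP => // iA; rewrite (hX i iA k).
- by [].
- case: b2 => //; have [h1 h2] := hY i j (revnb hs j) erefl k.
  by case: b1; [rewrite h2 | rewrite h1].
Qed.

Variable a0 : 'I_N -> 'I_n -> R.
Definition x0 i k : R := if i \in Anc then a0 i k else 0.
Definition z0 : zv := fun i b =>
  match b with
  | inl (inl k) => x0 i k
  | inl (inr k) => 0
  | inr (b1, b2, j, k) => if b1 then 0 else (if b2 then x0 (val j) k else x0 i k)
  end.

Lemma z0_X : inX Anc a0 z0.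
Proof. by move=> i iA k; rewrite /z0 /= /x0 iA. Qed.
Lemma z0_Y : inY z0.
Proof. by move=> i j i' e k; rewrite /z0 /=. Qed.
Lemma z0_A : gA z0 = fun _ _ => 0.
Proof.
apply: fext => i [[m j] k]; rewrite /gA mappA /=.
by case: ifP => _; rewrite /z0 /= ?subrr //; case: ifP => _; rewrite subrr.
Qed.

Lemma XY_add (z v : zv) (s : R) : inX Anc a0 z -> inY z -> inV Anc v ->
  inX Anc a0 (fun i b => z i b + s * v i b) /\ inY (fun i b => z i b + s * v i b).
Proof.
move=> hX hY [vX vY]; split.
  by move=> i iA k; rewrite hX // vX // mulr0 addr0.
move=> i j i' e k; have [h1 h2] := hY i j i' e k; have [h3 h4] := vY i j i' e k.
by rewrite h1 h2 h3 h4.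
Qed.

Lemma XY_sub (z z' : zv) : inX Anc a0 z -> inY z -> inX Anc a0 z' -> inY z' ->
  inV Anc (fun i b => z i b - z' i b).
Proof.
move=> hX hY hX' hY'; split.
  by move=> i iA k; rewrite hX // hX' // subrr.
move=> i j i' e k; have [h1 h2] := hY i j i' e k; have [h3 h4] := hY' i j i' e k.
by rewrite h1 h2 h3 h4.
Qed.

End Proj.

Section UKer.
Variables (R : realType) (n N : nat) (E : rel 'I_N) (i : 'I_N) (c : R).
Hypothesis c0 : 0 < c.

Lemma U_inj (j0 : NB E i) (x : zix n E i -> R) :
  (forall a, mapp (Umat E i c) x a = 0) -> forall a, x a = 0.
Proof.
move=> hU.
have e0 : wdot (Umat E i c) x x = 0.
  rewrite wdot_mapp /dotv big1 // => a _; by rewrite hU mulr0.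
have e : wdot (Umat E i c) x x = sqn (mapp (Hmat E i) x) + c * sqn (mapp (Amat E i) x) + c * Sf c x x.
  rewrite /sqn -wdotS -!wdot_mtm /wdot !mulr_sumr -!big_split; apply: eq_bigr => a _.
  rewrite !mulr_sumr -!big_split; apply: eq_bigr => b _ /=; rewrite /Umat; ring.
rewrite e0 /Sf in e; have h1 := sqn_ge0 (mapp (Hmat E i) x); have h2 := sqn_ge0 (mapp (Amat E i) x).
have h3 : 0 <= dotv (mapp (mabs (Amat E i)) x) (mapp (mabs (Amat E i)) x) := sqn_ge0 _.
have h4 : 0 <= dotv (mapp (mabs (Hmat E i)) x) (mapp (mabs (Hmat E i)) x) := sqn_ge0 _.
rewrite mulrDr mulrA mulfV ?gt_eqF // mul1r in e.
have p2 : 0 <= c * sqn (mapp (Amat E i) x) := mulr_ge0 (ltW c0) h2.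
have p3 : 0 <= c * dotv (mapp (mabs (Amat E i)) x) (mapp (mabs (Amat E i)) x) := mulr_ge0 (ltW c0) h3.
have q2 : c * sqn (mapp (Amat E i) x) = 0 by lra.
have q3 : c * dotv (mapp (mabs (Amat E i)) x) (mapp (mabs (Amat E i)) x) = 0 by lra.
have sH : sqn (mapp (Hmat E i) x) = 0 by lra.
have sHa : dotv (mapp (mabs (Hmat E i)) x) (mapp (mabs (Hmat E i)) x) = 0 by lra.
have sA : sqn (mapp (Amat E i) x) = 0.
  by move/eqP: q2; rewrite mulf_eq0 gt_eqF //= => /eqP.
have sAa : dotv (mapp (mabs (Amat E i)) x) (mapp (mabs (Amat E i)) x) = 0.
  by move/eqP: q3; rewrite mulf_eq0 gt_eqF //= => /eqP.
have rA : forall r, x (pA r) = 0 /\ x (qA r) = 0.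
  move=> r; have := sqn_eq0 sA r; have := @sqn_eq0 _ _ (mapp (mabs (Amat E i)) x) sAa r.
  rewrite mappA mappAabs => u v; split; lra.
have rH : forall r, x (pH r) = 0 /\ x (qH r) = 0.
  move=> r; have := sqn_eq0 sH r; have := @sqn_eq0 _ _ (mapp (mabs (Hmat E i)) x) sHa r.
  rewrite mappH mappHabs => u v; split; lra.
move=> [[k|k]|[[[b1 b2] j] k]].
- exact: (rA (ord0, j0, k)).1.
- exact: (rA (o1, j0, k)).1.
- case: b1; case: b2.
  + exact: (rA (o2, j, k)).2.
  + exact: (rA (o1, j, k)).2.
  + exact: (rH (Some j, k)).2.
  + exact: (rA (ord0, j, k)).2.
Qed.

End UKer.

Section GForms.
Variable R : realType.
Variables (N : nat) (T : 'I_N -> finType).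
Implicit Types u v x y : @fv R 'I_N T.

Definition G u v : R := \sum_i dotv (u i) (v i).

Lemma GC u v : G u v = G v u.
Proof. by apply: eq_bigr => i _; rewrite dotvC. Qed.
Lemma GDl s u u' v : G (fun i a => s * u i a + u' i a) v = s * G u v + G u' v.
Proof. by rewrite /G mulr_sumr -big_split; apply: eq_bigr => i _; rewrite dotvDl. Qed.
Lemma GDr s u v v' : G u (fun i a => s * v i a + v' i a) = s * G u v + G u v'.
Proof. by rewrite GC GDl !(GC u). Qed.
Lemma fsqnG u : fsqn u = G u u.
Proof. by []. Qed.

Lemma G_quad u v : forall s, 0 <= s ^+ 2 * fsqn u + 2 * s * G u v + fsqn v.
Proof.
move=> s; have := fsqn_ge0 (fun i a => s * u i a + v i a).
rewrite fsqnG GDl !GDr (GC v u) !fsqnG.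
by have -> : s * (s * G u u + G u v) + (s * G u v + G v v) = s ^+ 2 * G u u + 2 * s * G u v + G v v by ring.
Qed.

Lemma G_bound u v k : 0 < k -> 2 * `|G u v| <= k * fsqn u + k^-1 * fsqn v.
Proof. by move=> k0; apply: quad_bound => //; apply: G_quad. Qed.

Lemma fsqnD u v : fsqn (fun i a => u i a + v i a) <= 2 * (fsqn u + fsqn v).
Proof.
rewrite /fsqn -big_split mulr_sumr /=; apply: ler_sum => i _; exact: sqnD.
Qed.

Lemma fsqn_wsum (k : 'I_N -> R) (F : 'I_N -> R) (K : R) :
  (forall i, 0 <= F i) -> (forall i, k i <= K) -> \sum_i k i * F i <= K * \sum_i F i.
Proof.
move=> F0 kK; rewrite mulr_sumr; apply: ler_sum => i _.
by rewrite ler_wpM2r.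
Qed.

End GForms.

Lemma sum_le_sum (R : realType) (I : finType) (F : I -> R) j : (forall i, 0 <= F i) -> F j <= \sum_i F i.
Proof.
move=> F0; rewrite (bigD1 j) //= lerDl; apply: sumr_ge0 => i _; exact: F0.
Qed.

Section Forms2.
Variables (R : realType) (n N : nat) (E : rel 'I_N) (c : R).
Hypothesis c0 : 0 < c.
Local Notation zv := (@fv R 'I_N (zix n E)).
Implicit Types x y : zv.

Definition Sg x y : R := \sum_i Sf c (x i) (y i).

Lemma SgC x y : Sg x y = Sg y x.
Proof. by apply: eq_bigr => i _; rewrite SfC. Qed.
Lemma SgDl s x x' y : Sg (fun i a => s * x i a + x' i a) y = s * Sg x y + Sg x' y.
Proof. by rewrite /Sg mulr_sumr -big_split; apply: eq_bigr => i _; rewrite SfDl. Qed.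
Lemma SgDr s x y y' : Sg x (fun i a => s * y i a + y' i a) = s * Sg x y + Sg x y'.
Proof. by rewrite SgC SgDl !(SgC x). Qed.
Lemma Sg_ge0 x : 0 <= Sg x x.
Proof. by apply: sumr_ge0 => i _; apply: Sf_ge0. Qed.
Lemma Sg_quad x y : forall s, 0 <= s ^+ 2 * Sg x x + 2 * s * Sg x y + Sg y y.
Proof.
move=> s; have := Sg_ge0 (fun i a => s * x i a + y i a).
rewrite SgDl !SgDr (SgC y x).
by have -> : s * (s * Sg x x + Sg x y) + (s * Sg x y + Sg y y) = s ^+ 2 * Sg x x + 2 * s * Sg x y + Sg y y by ring.
Qed.
Lemma Sg_bound x y k : 0 < k -> 2 * `|Sg x y| <= k * Sg x x + k^-1 * Sg y y.
Proof. by move=> k0; apply: quad_bound => //; apply: Sg_quad. Qed.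
Lemma SgE x : Sg x x = fsqn (gAa x) + c^-1 * fsqn (gHa x).
Proof. by rewrite /Sg /fsqn mulr_sumr -big_split. Qed.

End Forms2.

Section Expand.
Variables (R : realType) (n N : nat) (E : rel 'I_N).
Variables (c : R) (d : 'I_N -> 'I_N -> R) (rr : 'I_N -> R).

Lemma Dapp_lin i s (x y : wix n E i -> R) :
  Dapp d rr (fun r => s * x r + y r) = fun r => s * Dapp d rr x r + Dapp d rr y r.
Proof. by apply: functional_extensionality => r; rewrite /Dapp; ring. Qed.

Lemma dot_Dapp i (w v : wix n E i -> R) : dotv w (Dapp d rr v) = dotv (Dapp d rr w) v.
Proof. by apply: eq_bigr => r _; rewrite /Dapp; ring. Qed.

Definition ell_i i (z v zo : zix n E i -> R) (w : wix n E i -> R) (lam : aix n E i -> R) : R :=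
  dotv (mapp (Hmat E i) z) (mapp (Hmat E i) v) - dotv w (Dapp d rr (mapp (Hmat E i) v))
  + dotv lam (mapp (Amat E i) v) + c * dotv (mapp (Amat E i) z) (mapp (Amat E i) v)
  + c * Sf c (vsub z zo) v.
Definition q_i i (v : zix n E i -> R) : R :=
  2^-1 * sqn (mapp (Hmat E i) v) + c / 2 * sqn (mapp (Amat E i) v) + c / 2 * Sf c v v.

Lemma sqn_lin (T : finType) s (x y : T -> R) :
  sqn (fun r => s * x r + y r) = s ^+ 2 * sqn x + 2 * s * dotv y x + sqn y.
Proof. rewrite /sqn dotvDl !dotvDr (dotvC x y); ring. Qed.

Lemma zobj_i_exp i (z v zo : zix n E i -> R) w lam s :
  zobj_i c d rr (fun a => s * v a + z a) w lam zo =
  zobj_i c d rr z w lam zo + s * ell_i z v zo w lam + s ^+ 2 * q_i v.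
Proof.
rewrite /zobj_i /Gi /ell_i /q_i !mapp_lin Dapp_lin !sqn_lin dotvDr !dotvDr.
have -> : vsub (fun a => s * v a + z a) zo = fun a => s * v a + vsub z zo a.
  by apply: functional_extensionality => a; rewrite /vsub; ring.
rewrite /wsqn.
have e1 : forall M (x : zix n E i -> R), \sum_a \sum_b x a * M a b * x b = wdot M x x by [].
rewrite !e1 !wdotS SfDl !SfDr (SfC c (vsub z zo) v).
by field.
Qed.

Variable Anc : {set 'I_N}.
Variable a0 : 'I_N -> 'I_n -> R.
Local Notation zv := (@fv R 'I_N (zix n E)).

Definition ellg (z v zo : zv) (w : wvar R n E) (lam : lvar R n E) : R :=
  \sum_i ell_i (z i) (v i) (zo i) (w i) (lam i).
Definition qg (v : zv) : R := \sum_i q_i (v i).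

Lemma zobj_exp (z v zo : zv) w lam s :
  zobj c d rr (fun i a => s * v i a + z i a) w lam zo =
  zobj c d rr z w lam zo + s * ellg z v zo w lam + s ^+ 2 * qg v.
Proof.
rewrite /zobj /ellg /qg !mulr_sumr -!big_split; apply: eq_bigr => i _.
exact: zobj_i_exp.
Qed.

Lemma lin_zero (l q : R) : (forall s, 0 <= s * l + s ^+ 2 * q) -> l = 0.
Proof.
move=> H; pose t := `|q| + 1.
have t0 : 0 < t by rewrite /t ltr_pwDr // normr_ge0.
have h := H (- l / t).
have e : - l / t * l + (- l / t) ^+ 2 * q = l ^+ 2 * (q - t) / t ^+ 2.
  by field; rewrite gt_eqF.
rewrite e in h.
have h2 : 0 <= l ^+ 2 * (q - t) / t ^+ 2 * t ^+ 2 := mulr_ge0 h (exprn_ge0 _ (ltW t0)).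
rewrite divfK ?expf_neq0 ?gt_eqF // in h2.
have hq : q - t <= -1 by rewrite /t; have := ler_norm q; lra.
have l2 : l ^+ 2 <= 0 by nra.
by apply/eqP; rewrite -sqrf_eq0 eq_le l2 sqr_ge0.
Qed.

Lemma optimality (zopt zo : zv) (w : wvar R n E) (lam : lvar R n E) (v : zv) :
  inX Anc a0 zopt -> inY zopt -> inV Anc v ->
  (forall z' : zv, inX Anc a0 z' -> inY z' -> zobj c d rr zopt w lam zo <= zobj c d rr z' w lam zo) ->
  ellg zopt v zo w lam = 0.
Proof.
move=> hX hY hV hmin; apply: (@lin_zero _ (qg v)) => s.
have [hX' hY'] := XY_add s hX hY hV.
have e : (fun i b => zopt i b + s * v i b) = (fun i a => s * v i a + zopt i a).
  by apply: fext => i b; rewrite addrC.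
rewrite e in hX' hY'; have := hmin _ hX' hY'; rewrite zobj_exp; lra.
Qed.


End Expand.

Section Scalar.
Variable R : realType.

Lemma energy_scalar (c K1 k B0 h' al' a' a dd X P L' L b : R) :
  0 < c -> 0 <= K1 -> 0 <= k -> 0 <= B0 -> 0 <= h' -> 0 <= al' -> 0 <= dd ->
  h' + b + (c * al' + P) + c * X = 0 ->
  a = dd - 2 * X + a' ->
  L' = c ^+ 2 * al' + 2 * c * P + L ->
  2 * `|b| <= 2 * B0 + 2^-1 * h' ->
  a' <= K1 * (h' + al') ->
  L' <= 2 * k * (h' + B0) + c * k * dd ->
  (1 + (c / (c + 1)) / (c * K1 + 2 * k / c + k + 1)) * (c * a' + L' / c)
    <= (c * a + L / c) + (2 * B0 + 2 * k * B0 / c).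
Proof.
move=> c0 K10 k0 B00 h0 al0 dd0 e1 e2 e3 hb ha hL.
set E' := c * a' + L' / c; set E := c * a + L / c.
have cn : c != 0 by rewrite gt_eqF.
have iden : E' = E - c * dd - c * al' - 2 * h' - 2 * b.
  have eP : P = - h' - b - c * al' - c * X by lra.
  by rewrite /E' /E e2 e3 eP; field.
have hb' : - 2 * b <= 2 * B0 + 2^-1 * h' by have := ler_norm (- b); rewrite normrN; lra.
have step1 : E' + (3 / 2) * h' + c * al' + c * dd <= E + 2 * B0 by rewrite iden; lra.
have cK1 : 0 <= c * K1 := mulr_ge0 (ltW c0) K10.
have kc : 0 <= 2 * k / c := divr_ge0 (mulr_ge0 (ler0n _ 2) k0) (ltW c0).
set K2 := c * K1 + 2 * k / c + k + 1.
have K20 : 0 < K2.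
  rewrite /K2; lra.
have hE' : E' <= K2 * (h' + al' + dd) + 2 * k * B0 / c.
  have t1 : c * a' <= c * K1 * (h' + al') by rewrite -mulrA ler_pM2l.
  have t2 : L' / c <= 2 * k * (h' + B0) / c + k * dd.
    rewrite ler_pdivrMr //.
    have -> : (2 * k * (h' + B0) / c + k * dd) * c = 2 * k * (h' + B0) + c * k * dd by field.
    done.
  have t3 : c * K1 * (h' + al') + (2 * k * (h' + B0) / c + k * dd) <= K2 * (h' + al' + dd) + 2 * k * B0 / c.
    rewrite /K2.
    have -> : 2 * k * (h' + B0) / c = 2 * k / c * h' + 2 * k * B0 / c by field.
    have q1 : 0 <= c * K1 * dd := mulr_ge0 cK1 dd0.
    have q2 : 0 <= 2 * k / c * al' := mulr_ge0 kc al0.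
    have q3 : 0 <= 2 * k / c * dd := mulr_ge0 kc dd0.
    have q4 : 0 <= k * h' := mulr_ge0 k0 h0.
    have q5 : 0 <= k * al' := mulr_ge0 k0 al0.
    nra.
  rewrite /E'; lra.
set mu := c / (c + 1).
have mu0 : 0 < mu by rewrite /mu divr_gt0 // addr_gt0.
have mu1 : mu <= 1 by rewrite /mu ler_pdivrMr ?addr_gt0 //; lra.
have muc : mu <= c by rewrite /mu ler_pdivrMr ?addr_gt0 //; nra.
have step2 : mu * (h' + al' + dd) <= (3 / 2) * h' + c * al' + c * dd by nra.
have step3 : mu / K2 * (E' - 2 * k * B0 / c) <= mu * (h' + al' + dd).
  rewrite -mulrA ler_pM2l // ler_pdivrMl //; lra.
have kb : 0 <= 2 * k * B0 / c := divr_ge0 (mulr_ge0 (mulr_ge0 (ler0n _ 2) k0) B00) (ltW c0).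
have step4 : mu / K2 * (2 * k * B0 / c) <= 2 * k * B0 / c.
  apply: ler_piMl => //; rewrite ler_pdivrMr // mul1r /K2; lra.
have e4 : (1 + mu / K2) * E' = E' + mu / K2 * (E' - 2 * k * B0 / c) + mu / K2 * (2 * k * B0 / c) by ring.
rewrite e4; lra.
Qed.
End Scalar.

Section Scalar2.
Variable R : realType.
Lemma L_scalar (L G1 S1 c k k1 k2 U dd x1 x2 : R) :
  0 < c -> 0 <= k1 -> 0 <= k2 -> k = k1 + c * k2 + 1 -> 0 <= L ->
  L = - G1 - c * S1 ->
  2 * `|G1| <= k * U + k^-1 * x1 -> 2 * `|S1| <= k * dd + k^-1 * x2 ->
  x1 <= k1 * L -> x2 <= k2 * L ->
  L <= k * U + c * k * dd.
Proof.
move=> c0 k10 k20 ek L0 eL h1 h2 h3 h4.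
have ck2 : 0 <= c * k2 := mulr_ge0 (ltW c0) k20.
have k0 : 0 < k by rewrite ek; lra.
have hx : k^-1 * x1 + c * (k^-1 * x2) <= L.
  have e : k^-1 * x1 + c * (k^-1 * x2) = (x1 + c * x2) / k by field; rewrite gt_eqF.
  rewrite e ler_pdivrMr //.
  have : x1 + c * x2 <= (k1 + c * k2) * L.
    have : c * x2 <= c * (k2 * L) by rewrite ler_pM2l.
    lra.
  have : (k1 + c * k2) * L <= L * k by rewrite ek mulrDr mulr1 mulrC; lra.
  lra.
have hS : c * (2 * `|S1|) <= c * (k * dd + k^-1 * x2) by rewrite ler_pM2l.
have nG : - G1 <= `|G1| by rewrite -normrN ler_norm.
have nS : - S1 <= `|S1| by rewrite -normrN ler_norm.
have cS : c * (- S1) <= c * `|S1| by rewrite ler_pM2l.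
have e2 : c * (k * dd + k^-1 * x2) = c * k * dd + c * (k^-1 * x2) by ring.
lra.
Qed.
End Scalar2.

Arguments gA [R n N E] x i _.
Arguments gH [R n N E] x i _.
Arguments gAa [R n N E] x i _.
Arguments gHa [R n N E] x i _.
Arguments gU [R n N E] c x i _.
Arguments gP [R n N E] Anc hs x i _.
Arguments z0 [R n N E] Anc a0 i _.

Lemma linF_comp (R : realType) (I1 I2 I3 : finType) (T1 : I1 -> finType) (T2 : I2 -> finType)
  (T3 : I3 -> finType) (f : fv R T2 -> fv R T3) (g : fv R T1 -> fv R T2) :
  linF f -> linF g -> linF (fun x => f (g x)).
Proof. by move=> lf lg s x y; rewrite lg lf. Qed.

Lemma linF_zero (R : realType) (I1 I2 : finType) (T1 : I1 -> finType) (T2 : I2 -> finType) :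
  linF (fun _ : fv R T1 => (fun _ _ => 0) : fv R T2).
Proof. by move=> s x y; apply: fext => i a; rewrite mulr0 addr0. Qed.

Lemma linF_id (R : realType) (I1 : finType) (T1 : I1 -> finType) :
  linF (fun x : fv R T1 => x).
Proof. by []. Qed.

Unset Implicit Arguments.
Section Main.
Variables (R : realType) (n N : nat) (E : rel 'I_N) (Anc : {set 'I_N}) (a : 'I_N -> 'I_n -> R)
  (d : 'I_N -> 'I_N -> R) (rr : 'I_N -> R) (c rho : R)
  (z : nat -> zvar R n E) (w : nat -> wvar R n E) (lam : nat -> lvar R n E)
  (ztil : nat -> zvar R n E).
Hypothesis hs : forall i j, E i j = E j i.
Hypothesis hdeg : forall i, (0 < Ndeg E i)%N.
Hypothesis conn : forall i j, connect E i j.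
Hypothesis anc : Anc != set0.
Hypothesis c0 : 0 < c.
Hypothesis alg : sp_admm_jcnl Anc a d rr c rho z w lam.
Hypothesis aux : is_aux_seq d rr c z w lam ztil.

Local Notation zv := (@fv R 'I_N (zix n E)).
Definition zz : zv := z0 Anc a.

Definition zeta t : zv := fun i b => z t i b - zz i b.
Fixpoint nu t : zv := match t with
  | 0 => fun _ _ => 0
  | t'.+1 => fun i b => c * zeta t'.+1 i b + nu t' i b end.

Lemma alg_X t : inX Anc a (z t.+1).
Proof. by case: (alg) => _ /(_ t) [[]]. Qed.
Lemma alg_Y t : inY (z t.+1).
Proof. by case: (alg) => _ /(_ t) [[_ []]]. Qed.
Lemma alg_min t (z' : zv) : inX Anc a z' -> inY z' ->
  zobj c d rr (z t.+1) (w t) (lam t) (z t) <= zobj c d rr z' (w t) (lam t) (z t).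
Proof. by case: (alg) => _ /(_ t) [[_ [_ h]] _]; apply: h. Qed.
Lemma alg_ball t i : inBalls (w t.+1 i).
Proof. by case: (alg) => _ /(_ t) [_ [/(_ i) [h _] _]]. Qed.
Lemma alg_lam0 i r : lam 0 i r = 0.
Proof. by case: (alg) => h _; apply: h. Qed.
Lemma alg_lamS t i r : lam t.+1 i r = lam t i r + c * mapp (Amat E i) (z t.+1 i) r.
Proof. by case: (alg) => _ /(_ t) [_ [_ h]]; apply: h. Qed.

Lemma inV_lin (s : R) (x y : zv) : inV Anc x -> inV Anc y -> inV Anc (fun i b => s * x i b + y i b).
Proof.
move=> [xX xY] [yX yY]; split.
  by move=> i iA k; rewrite xX // yX // mulr0 addr0.
move=> i j i' e k; have [h1 h2] := xY i j i' e k; have [h3 h4] := yY i j i' e k.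
by rewrite h1 h2 h3 h4.
Qed.

Lemma zeta_V t : (0 < t)%N -> inV Anc (zeta t).
Proof.
case: t => // t _; apply: XY_sub; [exact: alg_X | exact: alg_Y | exact: z0_X | exact: z0_Y].
Qed.

Lemma nu_V t : inV Anc (nu t).
Proof.
elim: t => [|t IH] /=.
  by split; [move=> ? ? ? | move=> ? ? ? ? ?].
by apply: inV_lin => //; apply: zeta_V.
Qed.

Lemma z_eq t i : z t i = fun b => 1 * zeta t i b + zz i b.
Proof. by apply: functional_extensionality => b; rewrite /zeta; ring. Qed.

Lemma zzA i : mapp (Amat E i) (zz i) = fun _ => 0.
Proof.
apply: functional_extensionality => r.
by have := congr1 (fun F : lvar R n E => F i r) (z0_A E Anc a).
Qed.

Lemma lam_nu t : lam t = gA (nu t).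
Proof.
apply: fext => i r; elim: t => [|t IH].
  by rewrite alg_lam0 /gA /mapp /= big1 // => ? _; rewrite mulr0.
rewrite alg_lamS IH /gA /= mapp_lin (z_eq t.+1 i) mapp_lin zzA; ring.
Qed.

Definition Q0 t : wvar R n E := fun i r => gH zz i r - Dapp d rr (w t i) r.

Lemma ell_form t (v : zv) :
  ellg c d rr (z t.+1) v (z t) (w t) (lam t) =
  G (gH (zeta t.+1)) (gH v) + G (Q0 t) (gH v) + G (gA (nu t.+1)) (gA v)
  + c * Sg c (fun i b => zeta t.+1 i b - zeta t i b) v.
Proof.
rewrite /ellg /G /Sg mulr_sumr -!big_split; apply: eq_bigr => i _ /=.
rewrite /ell_i.
have ev : vsub (z t.+1 i) (z t i) = fun b => zeta t.+1 i b - zeta t i b.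
  by apply: functional_extensionality => b; rewrite /vsub /zeta; ring.
rewrite ev lam_nu /gA /gH /Q0 /= (z_eq t.+1 i) !mapp_lin zzA dot_Dapp.
rewrite !dotvDl dotvS /gH.
have -> : dotv (fun _ : aix n E i => 0) (mapp (Amat E i) (v i)) = 0 by apply: dotv0.
ring.
Qed.


Local Notation P := (gP Anc hs).

Lemma KV_ex : exists KV, 0 <= KV /\ forall x : zv,
  fsqn (P x) <= KV * (fsqn (gH (P x)) + fsqn (gA (P x))).
Proof.
have H := (GL (linF_comp (@gH_lin R n N E) (gP_lin Anc hs)) (linF_comp (@gA_lin R n N E) (gP_lin Anc hs)) (gP_lin Anc hs)).
apply: H.
move=> x h1 h2; apply: fext => i b.
apply: (kernel_sig hs conn anc (x := P x) (sg := 1)) => //.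
- by rewrite oner_neq0.
- exact: gP_inV.
- move=> j r; have := congr1 (fun F : lvar R n E => F j r) h2.
  rewrite /gA mappA /= => e; rewrite mul1r; apply/eqP; rewrite -subr_eq0 e.
  by [].
- move=> j r; have := congr1 (fun F : wvar R n E => F j r) h1.
  rewrite /gH mappH /= => e; rewrite mul1r; apply/eqP; rewrite -subr_eq0 e.
  by [].
Qed.

Lemma KS_ex : exists KS, 0 <= KS /\ forall x : zv,
  fsqn (P x) <= KS * (fsqn (gAa (P x)) + fsqn (gHa (P x))).
Proof.
have H := (GL (linF_comp (@gAa_lin R n N E) (gP_lin Anc hs)) (linF_comp (@gHa_lin R n N E) (gP_lin Anc hs)) (gP_lin Anc hs)).
apply: H.
move=> x h1 h2; apply: fext => i b.
apply: (kernel_sig hs conn anc (x := P x) (sg := -1)) => //.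
- by rewrite oppr_eq0 oner_neq0.
- exact: gP_inV.
- move=> j r; have := congr1 (fun F : lvar R n E => F j r) h1.
  rewrite /gAa mappAabs /= => e; rewrite mulN1r; apply/eqP; rewrite -subr_eq0 opprK e.
  by [].
- move=> j r; have := congr1 (fun F : wvar R n E => F j r) h2.
  rewrite /gHa mappHabs /= => e; rewrite mulN1r; apply/eqP; rewrite -subr_eq0 opprK e.
  by [].
Qed.

Lemma KU_ex : exists KU, 0 <= KU /\ forall x : zv, fsqn x <= KU * fsqn (gU c x).
Proof.
have H := GL (@gU_lin R n N E c) (@linF_zero R _ _ (zix n E) (aix n E)) (@linF_id R _ (zix n E)).
have ker : forall x : zv, gU c x = (fun _ _ => 0) -> ((fun _ _ => 0) : lvar R n E) = (fun _ _ => 0) -> x = (fun _ _ => 0).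
  move=> x h1 _; apply: fext => i b.
  have /card_gt0P [j0 _] := hdeg i.
  apply: (U_inj c0 j0 (x := x i)) => r.
  by have := congr1 (fun F : zv => F i r) h1.
have [K [K0 HK]] := H ker.
exists K; split=> // x; have := HK x.
have -> : fsqn ((fun _ _ => 0) : lvar R n E) = 0.
  by rewrite /fsqn big1 // => i _; rewrite /sqn dotv0.
by rewrite addr0.
Qed.


Definition Dmap (w' : wvar R n E) : wvar R n E := fun i r => Dapp d rr (w' i) r.
Lemma Dmap_lin : linF Dmap.
Proof. by move=> s x y; apply: fext => i r; rewrite /Dmap Dapp_lin. Qed.

Lemma fsqnN (I : finType) (T : I -> finType) (v : fv R T) : fsqn (fun i a => - v i a) = fsqn v.
Proof. by apply: eq_bigr => i _; apply: eq_bigr => b _; rewrite mulrNN. Qed.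

Lemma fsqnB (T : 'I_N -> finType) (u v : fv R T) :
  fsqn (fun i a => u i a - v i a) <= 2 * (fsqn u + fsqn v).
Proof. by have := fsqnD u (fun i a => - v i a); rewrite fsqnN. Qed.

Definition Wb : R := \sum_i \sum_(o : option (NB E i)) 1.

Lemma w_bound t : fsqn (w t.+1) <= Wb.
Proof.
apply: ler_sum => i _.
have e : sqn (w t.+1 i) = \sum_(o : option (NB E i)) \sum_(k < n) (w t.+1 i (o, k)) ^+ 2.
  symmetry; rewrite pair_big /=; apply: eq_bigr => -[o k] _ /=; by rewrite expr2.
rewrite e; apply: ler_sum => o _; exact: alg_ball.
Qed.

Lemma Wb_ge0 : 0 <= Wb.
Proof. by apply: sumr_ge0 => i _; apply: sumr_ge0 => o _; apply: ler01. Qed.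

Definition Et t := c * Sg c (zeta t) (zeta t) + fsqn (gA (nu t)) / c.

Lemma Et_ge0 t : 0 <= Et t.
Proof.
apply: addr_ge0; first by apply: mulr_ge0; [apply: ltW | apply: Sg_ge0].
by apply: divr_ge0; [apply: fsqn_ge0 | apply: ltW].
Qed.


Lemma energy_bound : exists Em, forall t, (0 < t)%N -> Et t <= Em.
Proof.
have [KV [KV0 HKV]] := KV_ex.
have [CAa [CAa0 HCAa]] := LB (@gAa_lin R n N E).
have [CHa [CHa0 HCHa]] := LB (@gHa_lin R n N E).
have [CH [CH0 HCH]] := LB (@gH_lin R n N E).
have lP := @gP_lin R n N E Anc hs.
have [CP [CP0 HCP]] := LB lP.
have lf := linF_comp (@gA_lin R n N E) lP.
have HG := GI lf.
case: HG => g [Kg [Kg0 [HKg Hg]]].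
have [Dm [Dm0 HDm]] := LB Dmap_lin.
have ci0 : 0 <= c^-1 by rewrite invr_ge0 ltW.
pose CS := CAa + c^-1 * CHa.
have CS0 : 0 <= CS by rewrite /CS addr_ge0 // mulr_ge0.
have HCS : forall x : zv, Sg c x x <= CS * fsqn x.
  move=> x; rewrite SgE /CS mulrDl -mulrA.
  apply: lerD; first exact: HCAa.
  by apply: ler_wpM2l => //; exact: HCHa.
pose B0 := 2 * (fsqn (gH zz) + Dm * Wb).
have HQ0 : forall t, (0 < t)%N -> fsqn (Q0 t) <= B0.
  case=> // t _; rewrite /Q0; apply: (le_trans (fsqnB _ _ _)); rewrite /B0 ler_pM2l //.
  apply: lerD => //; apply: (le_trans (HDm (w t.+1))).
  by apply: ler_wpM2l => //; apply: w_bound.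
have B00 : 0 <= B0.
  by rewrite /B0 mulr_ge0 // addr_ge0 ?fsqn_ge0 // mulr_ge0 // Wb_ge0.
pose K1 := CS * KV.
have K10 : 0 <= K1 by rewrite mulr_ge0.
pose k1 := CH * CP * Kg.
pose k2 := CS * CP * Kg.
have k10 : 0 <= k1 by rewrite !mulr_ge0.
have k20 : 0 <= k2 by rewrite !mulr_ge0.
pose k := k1 + c * k2 + 1.
have k0 : 0 <= k by rewrite /k !addr_ge0 // mulr_ge0 // ltW.
pose eps := (c / (c + 1)) / (c * K1 + 2 * k / c + k + 1).
pose B := 2 * B0 + 2 * k * B0 / c.
have step : forall t, (0 < t)%N -> (1 + eps) * Et t.+1 <= Et t + B.
  move=> t t0.
  pose zt' := zeta t.+1; pose zt := zeta t.
  pose dz : zv := fun i b => zt' i b - zt i b.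
  have V' : inV Anc zt' := zeta_V t.+1 isT.
  have opt : forall v, inV Anc v -> ellg c d rr (z t.+1) v (z t) (w t) (lam t) = 0.
    move=> v hv; exact: (optimality (alg_X t) (alg_Y t) hv (alg_min t)).
  have nuS : gA (nu t.+1) = fun i r => c * gA zt' i r + gA (nu t) i r.
    exact: (@gA_lin R n N E c zt' (nu t)).
  have e1 := opt zt' V'.
  rewrite ell_form nuS GDl -/dz in e1.
  have e2 : Sg c zt zt = Sg c dz dz - 2 * Sg c dz zt' + Sg c zt' zt'.
    have -> : zt = fun i b => -1 * dz i b + zt' i b by apply: fext => i b; rewrite /dz; ring.
    rewrite SgDl !SgDr (SgC c zt' dz); ring.
  have e3 : fsqn (gA (nu t.+1)) = c ^+ 2 * fsqn (gA zt') + 2 * c * G (gA (nu t)) (gA zt') + fsqn (gA (nu t)).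
    rewrite !fsqnG nuS GDl !GDr (GC (gA zt') (gA (nu t))); ring.
  have hb : 2 * `|G (Q0 t) (gH zt')| <= 2 * B0 + 2^-1 * fsqn (gH zt').
    apply: (le_trans (G_bound _ _ (k := 2) _)) => //.
    by apply: lerD => //; rewrite ler_pM2l // HQ0.
  have ha : Sg c zt' zt' <= K1 * (fsqn (gH zt') + fsqn (gA zt')).
    apply: (le_trans (HCS zt')); rewrite /K1 -mulrA ler_wpM2l //.
    by have := HKV zt'; rewrite (gP_id hs V').
  have k0' : 0 < k by rewrite /k; have := mulr_ge0 (ltW c0) k20; lra.
  have hL : fsqn (gA (nu t.+1)) <= k * (2 * (fsqn (gH zt') + B0)) + c * k * Sg c dz dz.
    pose nv' := nu t.+1.
    have Vn : inV Anc nv' := nu_V t.+1.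
    pose v := gP Anc hs (g (gA nv')).
    have Av : gA v = gA nv' by have := Hg nv'; rewrite /= (gP_id hs Vn).
    have Vv : inV Anc v := @gP_inV R n N E Anc hs _.
    have ev := opt v Vv; rewrite ell_form Av -/nv' in ev.
    pose Q1 : wvar R n E := fun i r => gH zt' i r + Q0 t i r.
    have eQ : G Q1 (gH v) = G (gH zt') (gH v) + G (Q0 t) (gH v).
      have -> : Q1 = fun i r => 1 * gH zt' i r + Q0 t i r by apply: fext => i r; rewrite mul1r.
      by rewrite GDl mul1r.
    have fv : fsqn v <= CP * (Kg * fsqn (gA nv')).
      apply: (le_trans (HCP _)); apply: ler_wpM2l => //; exact: HKg.
    have fQ1 : fsqn Q1 <= 2 * (fsqn (gH zt') + B0).
      apply: (le_trans (fsqnD _ _)); rewrite ler_pM2l //; apply: lerD => //; exact: HQ0.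
    apply: (@L_scalar R _ (G Q1 (gH v)) (Sg c dz v) c k k1 k2 _ _ (fsqn (gH v)) (Sg c v v)
              c0 k10 k20 erefl (fsqn_ge0 _)).
    - rewrite /nv' -/dz in ev *; rewrite fsqnG; lra.
    - apply: (le_trans (G_bound _ _ k0')); apply: lerD => //; rewrite ler_pM2l //.
    - exact: (Sg_bound c0 _ _ k0').
    - apply: (le_trans (HCH v)); rewrite /k1 -!mulrA; apply: ler_wpM2l => //.
    - apply: (le_trans (HCS v)); rewrite /k2 -!mulrA; apply: ler_wpM2l => //.
  have hL' : fsqn (gA (nu t.+1)) <= 2 * k * (fsqn (gH zt') + B0) + c * k * Sg c dz dz.
    by move: hL; rewrite mulrA (mulrC k 2).
  have e1' : fsqn (gH zt') + G (Q0 t) (gH zt') + (c * fsqn (gA zt') + G (gA (nu t)) (gA zt'))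
             + c * Sg c dz zt' = 0 by rewrite !fsqnG.
  exact: (energy_scalar c0 K10 k0 B00 (fsqn_ge0 (gH zt')) (fsqn_ge0 (gA zt')) (Sg_ge0 c0 dz)
            e1' e2 e3 hb ha hL').
have eps0 : 0 < eps.
  rewrite /eps; apply: divr_gt0; first by apply: divr_gt0 => //; rewrite addr_gt0.
  have : 0 <= c * K1 + 2 * k / c + k.
    by rewrite !addr_ge0 // ?mulr_ge0 // ?divr_ge0 // ?mulr_ge0 // ltW.
  lra.
exists (Num.max (Et 1) (B / eps)).
suff H : forall t, Et t.+1 <= Num.max (Et 1) (B / eps) by case.
set M := Num.max (Et 1) (B / eps).
have hM1 : Et 1 <= M by rewrite /M le_max lexx.
have hM2 : B / eps <= M by rewrite /M le_max lexx orbT.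
have hM3 : B <= eps * M by move: hM2; rewrite ler_pdivrMr // mulrC.
elim=> [//|t IH].
have := step t.+1 isT => h.
have : (1 + eps) * Et t.+2 <= (1 + eps) * M by lra.
by rewrite ler_pM2l //; lra.
Qed.


Definition Map1 (w' : wvar R n E) : zv := fun i b => mappT (Hmat E i) (Dapp d rr (w' i)) b.
Definition Map2 (l : lvar R n E) : zv := fun i b => mappT (Amat E i) (l i) b.
Definition Map3 (x : zv) : zv := fun i b => c * mapp (Smat E i c) (x i) b.
Lemma Map1_lin : linF Map1.
Proof. by move=> s x y; apply: fext => i b; rewrite /Map1 Dapp_lin mappT_lin. Qed.
Lemma Map2_lin : linF Map2.
Proof. by move=> s x y; apply: fext => i b; rewrite /Map2 mappT_lin. Qed.
Lemma Map3_lin : linF Map3.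
Proof. by move=> s x y; apply: fext => i b; rewrite /Map3 mapp_lin; ring. Qed.

Lemma main_bound : exists M, forall t : nat, (1 <= t)%N ->
    [/\ gsqn (z t) <= M, gsqn (w t) <= M, gsqn (lam t) <= M & gsqn (ztil t) <= M].
Proof.
have [Em HEm] := energy_bound.
have Em0 : 0 <= Em := le_trans (Et_ge0 1) (HEm 1 isT).
have [KS [KS0 HKS]] := KS_ex.
have [KU [KU0 HKU]] := KU_ex.
have [C1 [C10 HC1]] := LB Map1_lin.
have [C2 [C20 HC2]] := LB Map2_lin.
have [C3 [C30 HC3]] := LB Map3_lin.
have cn : c != 0 by rewrite gt_eqF.
pose Mzeta := KS * ((1 + c) * (Em / c)).
have Mzeta0 : 0 <= Mzeta := mulr_ge0 KS0 (mulr_ge0 (addr_ge0 ler01 (ltW c0)) (divr_ge0 Em0 (ltW c0))).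
have Hzeta : forall t, (0 < t)%N -> fsqn (zeta t) <= Mzeta.
  move=> t t0; have V := zeta_V t t0.
  have := HKS (zeta t); rewrite (gP_id hs V) => h; apply: (le_trans h).
  apply: ler_wpM2l => //.
  have hSg : Sg c (zeta t) (zeta t) <= Em / c.
    rewrite ler_pdivlMr // mulrC; apply: le_trans (HEm t t0); rewrite /Et lerDl.
    by apply: divr_ge0; [apply: fsqn_ge0 | apply: ltW].
  have h1 := fsqn_ge0 (gAa (zeta t)); have h2 := fsqn_ge0 (gHa (zeta t)).
  rewrite SgE in hSg.
  have h3 : fsqn (gHa (zeta t)) = c * (c^-1 * fsqn (gHa (zeta t))) by rewrite mulrA mulfV // mul1r.
  have h4 : 0 <= c^-1 * fsqn (gHa (zeta t)) by rewrite mulr_ge0 // invr_ge0 ltW.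
  have h5 : c * (c^-1 * fsqn (gHa (zeta t))) <= c * (Em / c) .
    by rewrite ler_pM2l //; lra.
  have h6 : c * fsqn (gAa (zeta t)) <= c * (Em / c).
    by rewrite ler_pM2l //; lra.
  have h7 : (1 + c) * (Em / c) = Em / c + c * (Em / c) by ring.
  rewrite h7; have h8 : fsqn (gAa (zeta t)) <= Em / c by lra.
  have h9 : 0 <= c * fsqn (gAa (zeta t)) by rewrite mulr_ge0 // ltW.
  lra.
pose Mz := 2 * (Mzeta + fsqn zz).
have Hz : forall t, (0 < t)%N -> fsqn (z t) <= Mz.
  move=> t t0.
  have -> : z t = fun i b => zeta t i b + zz i b by apply: fext => i b; rewrite /zeta; ring.
  apply: (le_trans (fsqnD _ _)); rewrite ler_pM2l //; apply: lerD => //; exact: Hzeta.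
pose Ml := c * Em.
have Hl : forall t, (0 < t)%N -> fsqn (lam t) <= Ml.
  move=> t t0; rewrite lam_nu /Ml.
  have h := HEm t t0; rewrite /Et in h.
  have h1 : 0 <= c * Sg c (zeta t) (zeta t) by rewrite mulr_ge0 ?Sg_ge0 // ltW.
  have h2 : fsqn (gA (nu t)) / c <= Em by lra.
  by move: h2; rewrite ler_pdivrMr // mulrC.
pose Mzt := KU * (4 * (C1 * Wb) + 4 * (C2 * Ml) + 2 * (C3 * Mz)).
have Hzt : forall t, (1 < t)%N -> fsqn (ztil t) <= Mzt.
  case=> [//|] [//|t] _.
  apply: (le_trans (HKU _)); apply: ler_wpM2l => //.
  have -> : gU c (ztil t.+2) = fun i b => (Map1 (w t.+1) i b - Map2 (lam t.+1) i b) + Map3 (z t.+1) i b.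
    by apply: fext => i b; rewrite /gU aux.
  apply: (le_trans (fsqnD _ _)).
  have hA := fsqnB _ (Map1 (w t.+1)) (Map2 (lam t.+1)).
  have hB1 : fsqn (Map1 (w t.+1)) <= C1 * Wb.
    by apply: (le_trans (HC1 _)); apply: ler_wpM2l => //; exact: w_bound.
  have hB2 : fsqn (Map2 (lam t.+1)) <= C2 * Ml.
    by apply: (le_trans (HC2 _)); apply: ler_wpM2l => //; exact: Hl.
  have hB3 : fsqn (Map3 (z t.+1)) <= C3 * Mz.
    by apply: (le_trans (HC3 _)); apply: ler_wpM2l => //; exact: Hz.
  lra.
have Mz0 : 0 <= Mz := mulr_ge0 (ler0n _ 2) (addr_ge0 Mzeta0 (fsqn_ge0 _)).
have Ml0 : 0 <= Ml := mulr_ge0 (ltW c0) Em0.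
have Wb0 := Wb_ge0.
have Mzt0 : 0 <= Mzt.
  apply: mulr_ge0 => //; apply: addr_ge0; first apply: addr_ge0.
  - exact: mulr_ge0 (ler0n _ 4) (mulr_ge0 C10 Wb0).
  - exact: mulr_ge0 (ler0n _ 4) (mulr_ge0 C20 Ml0).
  - exact: mulr_ge0 (ler0n _ 2) (mulr_ge0 C30 Mz0).
have zt10 := fsqn_ge0 (ztil 1).
exists (Mz + Wb + Ml + fsqn (ztil 1) + Mzt) => t t1; split.
- apply: (le_trans (Hz t t1)); lra.
- case: t t1 => [//|t] _; apply: (le_trans (w_bound t)); lra.
- apply: (le_trans (Hl t t1)); lra.
- case: t t1 => [//|[|t]] _.
    have e : gsqn (ztil 1) = fsqn (ztil 1) by [].
    rewrite e; lra.
  apply: (le_trans (Hzt t.+2 isT)); lra.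
Qed.

End Main.

Set Implicit Arguments.

Theorem lemmaA8p2 (R : realType) (n N : nat) (E : rel 'I_N)
    (Anc : {set 'I_N}) (a : 'I_N -> 'I_n -> R)
    (d : 'I_N -> 'I_N -> R) (r : 'I_N -> R) (c rho : R)
    (z : nat -> zvar R n E) (w : nat -> wvar R n E) (lam : nat -> lvar R n E)
    (ztil : nat -> zvar R n E) :
  (* undirected simple graph, every node has a neighbour, connected *)
  (forall i j, E i j = E j i) ->
  (forall i, ~~ E i i) ->
  (forall i, (0 < Ndeg E i)%N) ->
  (forall i j, connect E i j) ->
  (* anchors *)
  Anc != set0 ->
  (* measurements *)
  (forall i j, E i j -> d i j = d j i) ->
  (forall i j, E i j -> 0 <= d i j) ->
  (forall i, 0 <= r i) ->
  (* parameters *)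
  0 < c -> 0 < rho -> condC n E d r c rho ->
  (* the algorithm and the auxiliary sequence *)
  sp_admm_jcnl Anc a d r c rho z w lam ->
  is_aux_seq d r c z w lam ztil ->
  exists M : R, forall t : nat, (1 <= t)%N ->
    [/\ gsqn (z t) <= M, gsqn (w t) <= M, gsqn (lam t) <= M & gsqn (ztil t) <= M].
Proof.
move=> hs _ hdeg conn anc _ _ _ c0 _ _ alg aux.
exact: (@main_bound _ _ _ _ _ _ _ _ _ _ _ _ _ _ hs hdeg conn anc c0 alg aux).
Qed.
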